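(* Let $g(u;a)=u(1-u)(u-a)$, $k>0$ and $a\in(0,1)$. Then: (i) If $d>0$ satisfies $d<\min\{\frac{a^2}{4k},\frac{(1-a)^2}{4}\}$ (which equals $\frac{a^2}{4k}$ if $a\le\frac{1}{1/\sqrt k+1}$ and $\frac{(1-a)^2}{4}$ if $a\ge\frac{1}{1/\sqrt k+1}$), then $c(a,d,k)=0$. (ii) Let $d_0(a,k):=\frac{1}{k+1}\min\{k\,d^+(a,k),\,d^-(a)\}$, where $d^-(a)=\max_{y\in(a,1)}\frac{g(y;a)}{y}$ and $d^+(a,k)=\max_{y\in(1-a,1)}\frac{-g(1-y;a)}{ky}$. Then for every $0<d<d_0(a,k)$ and every sequence $(s_i)_{i\in\mathbb Z}\subset\{0,1\}$ there is a function $\Phi:\mathbb R\to\mathbb R$ with $0=d(k\Phi(\xi+1)-(k+1)\Phi(\xi)+\Phi(\xi-1))+g(\Phi(\xi);a)$ for all $\xi\in\mathbb R$ and with $\Phi(i)\in[0,a)$ if $s_i=0$, $\Phi(i)\in(a,1]$ if $s_i=1$. In particular, for $0<d<d_0(a,k)$ there exist infinitely many bounded such solutions (solutions of the traveling wave equation with $c=0$). (iii) If $k>1$ and $d>\frac{a^2}{4(\sqrt k-1)^2}$, then $c(a,d,k)<0$.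
   Context: For $k>0$, $a\in(0,1)$, $d>0$ consider the traveling wave problem: find $c\in\mathbb R$ and $\Phi:\mathbb R\to\mathbb R$ with $$-c\Phi'(\xi)=d\big(k\Phi(\xi+1)-(k+1)\Phi(\xi)+\Phi(\xi-1)\big)+g(\Phi(\xi);a)\quad(\xi\in\mathbb R),\qquad \lim_{\xi\to-\infty}\Phi(\xi)=0,\ \lim_{\xi\to+\infty}\Phi(\xi)=1.$$ It is known (Mallet-Paret) that for bistable $g$ such as the cubic this problem has a solution with $\Phi$ non-decreasing and that $c$ is uniquely determined; it is denoted $c(a,d,k)$. *)

(* Defs.v *)
From Stdlib Require Import Reals Lra ZArith.
From Coquelicot Require Import Coquelicot.
Open Scope R_scope.

Definition g (u a : R) : R := u * (1 - u) * (u - a).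

Definition lattice_rhs (a d k : R) (Phi : R -> R) (xi : R) : R :=
  d * (k * Phi (xi + 1) - (k + 1) * Phi xi + Phi (xi - 1)) + g (Phi xi) a.

(* When c = 0 the derivative term vanishes
   and no regularity is required (pinned waves may be discontinuous). *)
Definition tw_solution (a d k c : R) (Phi : R -> R) : Prop :=
  (c <> 0 -> forall xi, ex_derive Phi xi) /\
  (forall xi, - c * Derive Phi xi = lattice_rhs a d k Phi xi) /\
  is_lim Phi m_infty 0 /\ is_lim Phi p_infty 1.

(* Solution with non-decreasing profile (the objects defining c(a,d,k)). *)
Definition monotone_tw_solution (a d k c : R) (Phi : R -> R) : Prop :=
  tw_solution a d k c Phi /\ (forall x y, x <= y -> Phi x <= Phi y).

Definition d_minus (a : R) : R :=
  real (Lub_Rbar (fun z => exists y, a < y < 1 /\ z = g y a / y)).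

Definition d_plus (a k : R) : R :=
  real (Lub_Rbar (fun z => exists y, 1 - a < y < 1 /\ z = - g (1 - y) a / (k * y))).

Definition d_zero (a k : R) : R := Rmin (k * d_plus a k) (d_minus a) / (k + 1).

Definition stationary_solution (a d k : R) (Phi : R -> R) : Prop :=
  forall xi, 0 = lattice_rhs a d k Phi xi.

(* Main.v *)
Require Import Defs.
From Stdlib Require Import Reals Lra ZArith.
From Coquelicot Require Import Coquelicot.
From Stdlib Require Import Lia ClassicalChoice.
Open Scope R_scope.

Lemma lim_m (f:R->R) (l:R) : is_lim f m_infty l ->
  forall eps, 0<eps -> exists M, forall x, x < M -> Rabs (f x - l) < eps.
Proof.
intros H eps He.
assert (P : Rbar_locally (Finite l) (fun y => Rabs (y - l) < eps)).
{ exists (mkposreal eps He). intros y Hy. exact Hy. }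
destruct (H _ P) as [M HM]. exists M. exact HM.
Qed.

Lemma lim_p (f:R->R) (l:R) : is_lim f p_infty l ->
  forall eps, 0<eps -> exists M, forall x, M < x -> Rabs (f x - l) < eps.
Proof.
intros H eps He.
assert (P : Rbar_locally (Finite l) (fun y => Rabs (y - l) < eps)).
{ exists (mkposreal eps He). intros y Hy. exact Hy. }
destruct (H _ P) as [M HM]. exists M. exact HM.
Qed.

Lemma mono_bounds (Phi : R -> R) :
  (forall x y, x <= y -> Phi x <= Phi y) -> is_lim Phi m_infty 0 -> is_lim Phi p_infty 1 ->
  forall x, 0 <= Phi x <= 1.
Proof.
intros Hm H0 H1 x. split.
- destruct (Rle_or_lt 0 (Phi x)) as [h|h]; auto.
  destruct (lim_m _ _ H0 (- Phi x) ltac:(lra)) as [M HM].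
  set (y := Rmin M x - 1).
  assert (y < M) by (unfold y; generalize (Rmin_l M x); lra).
  assert (y <= x) by (unfold y; generalize (Rmin_r M x); lra).
  specialize (HM y H). specialize (Hm y x H2).
  apply Rabs_def2 in HM. lra.
- destruct (Rle_or_lt (Phi x) 1) as [h|h]; auto.
  destruct (lim_p _ _ H1 (Phi x - 1) ltac:(lra)) as [M HM].
  set (y := Rmax M x + 1).
  assert (M < y) by (unfold y; generalize (Rmax_l M x); lra).
  assert (x <= y) by (unfold y; generalize (Rmax_r M x); lra).
  specialize (HM y H). specialize (Hm x y H2).
  apply Rabs_def2 in HM. lra.
Qed.

Lemma deriv_nonneg (Phi : R -> R) x :
  (forall x y, x <= y -> Phi x <= Phi y) -> ex_derive Phi x -> 0 <= Derive Phi x.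
Proof.
intros Hm Hd.
pose proof (Derive_correct _ _ Hd) as D.
apply is_derive_Reals in D.
destruct (Rle_or_lt 0 (Derive Phi x)) as [h|h]; auto.
destruct (D (- Derive Phi x) ltac:(lra)) as [del Hdel].
assert (hp : 0 < del / 2) by (generalize (cond_pos del); lra).
specialize (Hdel (del/2) ltac:(lra)).
rewrite Rabs_pos_eq in Hdel by lra.
specialize (Hdel ltac:(generalize (cond_pos del); lra)).
assert (0 <= (Phi (x + del/2) - Phi x) / (del/2)).
{ apply Rdiv_le_0_compat; [|lra]. assert (Phi x <= Phi (x+del/2)) by (apply Hm; lra). lra. }
apply Rabs_def2 in Hdel. lra.
Qed.

Lemma cont_of_deriv (Phi : R -> R) : (forall x, ex_derive Phi x) -> continuity Phi.
Proof.
intros H x. apply continuity_pt_filterlim. apply (@ex_derive_continuous R_AbsRing R_NormedModule). apply H.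
Qed.

Lemma ivt_val (Phi : R -> R) v :
  (forall x y, x <= y -> Phi x <= Phi y) -> is_lim Phi m_infty 0 -> is_lim Phi p_infty 1 ->
  continuity Phi -> 0 < v < 1 -> exists z, Phi z = v.
Proof.
intros Hm H0 H1 Hc Hv.
destruct (lim_m _ _ H0 v ltac:(lra)) as [M HM].
destruct (lim_p _ _ H1 (1 - v) ltac:(lra)) as [N HN].
specialize (HM (M-1) ltac:(lra)). specialize (HN (N+1) ltac:(lra)).
apply Rabs_def2 in HM. apply Rabs_def2 in HN.
assert (M - 1 < N + 1).
{ destruct (Rlt_or_le (M-1) (N+1)) as [h|h]; auto. specialize (Hm _ _ h). lra. }
destruct (IVT (fun t => Phi t - v) (M-1) (N+1)) as [z [_ Hz]]; auto.
- apply continuity_minus; auto. apply continuity_const. intros ? ?; auto.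
- simpl; lra.
- simpl; lra.
- exists z. lra.
Qed.

Lemma part1 k a d c Phi : 0 < k -> 0 < a < 1 -> 0 < d -> d * (4 * k) < a ^ 2 -> d * 4 < (1 - a) ^ 2 ->
  monotone_tw_solution a d k c Phi -> c = 0.
Proof.
intros hk ha hd h1 h2 [[Hd [He [H0 H1]]] Hm].
destruct (Req_dec c 0) as [|Hc]; auto. exfalso.
pose proof (mono_bounds _ Hm H0 H1) as B.
pose proof (cont_of_deriv _ (Hd Hc)) as Cn.
destruct (ivt_val _ (a/2) Hm H0 H1 Cn ltac:(lra)) as [z1 Hz1].
destruct (ivt_val _ ((1+a)/2) Hm H0 H1 Cn ltac:(lra)) as [z2 Hz2].
pose proof (deriv_nonneg _ z1 Hm (Hd Hc z1)) as D1.
pose proof (deriv_nonneg _ z2 Hm (Hd Hc z2)) as D2.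
pose proof (He z1) as E1. pose proof (He z2) as E2.
unfold lattice_rhs, g in E1, E2. rewrite Hz1 in E1. rewrite Hz2 in E2.
assert (R1 : d * (k * Phi (z1 + 1) - (k + 1) * (a / 2) + Phi (z1 - 1)) + a / 2 * (1 - a / 2) * (a / 2 - a) < 0).
{ destruct (B (z1+1)). assert (Phi (z1 - 1) <= a/2) by (rewrite <- Hz1; apply Hm; lra).
  assert (d * (k * Phi (z1 + 1) - (k + 1) * (a / 2) + Phi (z1 - 1)) <= d * (k * 1 - (k+1)*(a/2) + a/2)).
  { apply Rmult_le_compat_l; nra. }
  nra. }
assert (R2 : 0 < d * (k * Phi (z2 + 1) - (k + 1) * ((1 + a) / 2) + Phi (z2 - 1)) + (1 + a) / 2 * (1 - (1 + a) / 2) * ((1 + a) / 2 - a)).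
{ destruct (B (z2-1)). assert ((1+a)/2 <= Phi (z2 + 1)) by (rewrite <- Hz2; apply Hm; lra).
  assert (d * (k * ((1+a)/2) - (k+1)*((1+a)/2) + 0) <= d * (k * Phi (z2 + 1) - (k + 1) * ((1 + a) / 2) + Phi (z2 - 1))).
  { apply Rmult_le_compat_l; nra. }
  nra. }
destruct (Rlt_or_le 0 c).
- nra.
- nra.
Qed.

Lemma part3 k a d c Phi : 1 < k -> 0 < a < 1 -> 0 < d -> a ^ 2 < 4 * d * (sqrt k - 1) ^ 2 ->
  monotone_tw_solution a d k c Phi -> c < 0.
Proof.
intros hk ha hd h [[Hd [He [H0 H1]]] Hm].
destruct (Rlt_or_le c 0) as [|hc]; auto. exfalso.
pose proof (mono_bounds _ Hm H0 H1) as B.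
assert (Hneg : forall x, lattice_rhs a d k Phi x <= 0).
{ intro x. rewrite <- He. destruct (Req_dec c 0) as [e|e].
  - subst; lra.
  - pose proof (deriv_nonneg _ x Hm (Hd e x)). nra. }
set (s := sqrt k).
assert (ss : s * s = k) by (apply sqrt_sqrt; lra).
assert (s1 : 1 < s).
{ destruct (Rle_or_lt s 1); auto. assert (0 <= s) by apply sqrt_pos. nra. }
set (sg := s - 1).
set (D := d * sg ^ 2).
assert (hD : a ^ 2 / 4 < D) by (unfold D, sg, s; lra).
assert (hD0 : 0 < D) by nra.
set (b := 1 - (D - a^2/4) * (1 - a) / D).
assert (hb1 : D * b = D - (D - a^2/4) * (1-a)) by (unfold b; field; lra).
assert (hb : a < b < 1).
{ assert (0 < (D - a^2/4) * (1-a)) by (apply Rmult_lt_0_compat; lra).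
  assert (0 < a^2/4 * (1-a)) by (apply Rmult_lt_0_compat; nra).
  split; apply (Rmult_lt_reg_l D); nra. }
assert (Key : forall u, 0 <= u <= b -> - g u a <= D * (b - u)).
{ intros u [u0 u1]. unfold g.
  destruct (Rle_or_lt u a).
  - assert (u * (a - u) <= a^2/4) by (pose proof (pow2_ge_0 (u - a/2)); nra).
    assert (D * (b - u) = D * (1-u) - (D - a^2/4) * (1-a)) by (rewrite Rmult_minus_distr_l, hb1; ring).
    assert ((D - a^2/4) * (1-a) <= (D - a^2/4) * (1-u)) by (apply Rmult_le_compat_l; lra).
    assert (u * (a - u) * (1 - u) <= a^2/4 * (1-u)) by (apply Rmult_le_compat_r; lra).
    nra.
  - assert (0 <= u * (1 - u)) by nra.
    assert (0 <= u * (1 - u) * (u - a)) by (apply Rmult_le_pos; lra).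
    assert (0 <= D * (b - u)) by (apply Rmult_le_pos; lra).
    lra. }
assert (hsg : 0 < sg) by (unfold sg; lra).
set (eps := sg * b / (1 + sg)).
assert (heps : 0 < eps) by (unfold eps; apply Rdiv_lt_0_compat; nra).
destruct (lim_m _ _ H0 eps heps) as [M HM].
set (p := M - 2).
assert (Ind : forall n, Phi (p + INR n + 1) - Phi (p + INR n) <= sg * (b - Phi (p + INR n + 1))).
{ induction n.
  - simpl. rewrite Rplus_0_r.
    specialize (HM (p+1) ltac:(unfold p; lra)). apply Rabs_def2 in HM.
    destruct (B p).
    assert (Phi (p+1) * (1 + sg) < sg * b).
    { unfold eps in HM. destruct HM as [HM _].
      apply (Rmult_lt_compat_r (1+sg)) in HM; [|lra].
      replace (sg * b / (1 + sg) * (1 + sg)) with (sg * b) in HM by (field; lra). lra. }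
    nra.
  - rewrite S_INR.
    set (x := p + INR n + 1) in *.
    replace (p + (INR n + 1)) with x by (unfold x; ring).
    replace (p + INR n) with (x - 1) in IHn by (unfold x; ring).
    pose proof (Hneg x) as E. unfold lattice_rhs in E.
    destruct (B x) as [bx0 bx1]. destruct (B (x-1)). 
    assert (Hmx : Phi (x - 1) <= Phi x) by (apply Hm; lra).
    assert (ub : Phi x <= b) by nra.
    pose proof (Key (Phi x) (conj bx0 ub)) as K.
    assert (kk : k = (1 + sg) ^ 2) by (unfold sg; nra).
    set (Y := Phi (x + 1) - Phi x).
    assert (d * (k * Y) <= d * (sg * (1 + sg) * (b - Phi x))).
    { unfold D in K. unfold Y. nra. }
    assert (k * Y <= sg * (1 + sg) * (b - Phi x)).
    { apply (Rmult_le_reg_l d); lra. }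
    rewrite kk in H3.
    assert (H5 : (1 + sg) * Y <= sg * (b - Phi x)).
    { apply (Rmult_le_reg_l (1 + sg)); nra. }
    assert (E2 : sg * (b - Phi (x + 1)) = sg * (b - Phi x) - sg * (Phi (x+1) - Phi x)) by ring.
    rewrite E2. change (Phi (x+1) - Phi x) with Y.
    assert (H6 : (1+sg)*Y = Y + sg*Y) by ring. lra. }
destruct (lim_p _ _ H1 (1 - b) ltac:(lra)) as [N HN].
destruct (INR_unbounded (N - p)) as [n Hn].
specialize (HN (p + INR n + 1) ltac:(lra)). apply Rabs_def2 in HN.
specialize (Ind n). destruct (B (p + INR n)).
assert (Phi (p + INR n) <= Phi (p + INR n + 1)) by (apply Hm; lra).
nra.
Qed.

Definition Fl (a d k : R) (u : Z -> R) (i : Z) : R :=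
  d * (k * u (i + 1)%Z - (k + 1) * u i + u (i - 1)%Z) + g (u i) a.

Definition Tl (a d k : R) (u : Z -> R) (i : Z) : R :=
  u i + Fl a d k u i / (5 + (k + 1) * d).

Fixpoint itl (a d k : R) (v : Z -> R) (n : nat) : Z -> R :=
  match n with O => v | S n => Tl a d k (itl a d k v n) end.

Lemma g_lip a x y : 0 < a < 1 -> 0 <= x <= y -> y <= 1 -> - 4 * (y - x) <= g y a - g x a.
Proof.
intros ha hx hy. unfold g.
replace (y * (1 - y) * (y - a) - x * (1 - x) * (x - a)) with
  ((y - x) * (- (y*y + x*y + x*x) + (1 + a) * (x + y) - a)) by ring.
assert (- 4 <= - (y*y + x*y + x*x) + (1 + a) * (x + y) - a) by nra.
nra.
Qed.

Lemma Tl_mono a d k u w i : 0 < k -> 0 < a < 1 -> 0 < d ->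
  (forall j, 0 <= u j /\ u j <= w j /\ w j <= 1) -> Tl a d k u i <= Tl a d k w i.
Proof.
intros hk ha hd H. unfold Tl, Fl.
destruct (H i) as [a1 [a2 a3]]. destruct (H (i+1)%Z) as [b1 [b2 b3]].
destruct (H (i-1)%Z) as [c1 [c2 c3]].
pose proof (g_lip a (u i) (w i) ha (conj a1 a2) a3) as G.
set (L := 5 + (k + 1) * d).
assert (hL : 0 < L) by (unfold L; nra).
cut (0 <= (w i - u i) + ((d * (k * w (i + 1)%Z - (k + 1) * w i + w (i - 1)%Z) + g (w i) a) -
   (d * (k * u (i + 1)%Z - (k + 1) * u i + u (i - 1)%Z) + g (u i) a)) / L).
{ intro C. unfold Rdiv in *. lra. }
assert (((d * (k * w (i + 1)%Z - (k + 1) * w i + w (i - 1)%Z) + g (w i) a) -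
   (d * (k * u (i + 1)%Z - (k + 1) * u i + u (i - 1)%Z) + g (u i) a)) >= - (L - 1) * (w i - u i)).
{ unfold L. assert (0 <= d * k * (w (i+1)%Z - u (i+1)%Z)).
  { apply Rmult_le_pos; [nra|lra]. }
  assert (0 <= d * (w (i-1)%Z - u (i-1)%Z)) by (apply Rmult_le_pos; lra).
  nra. }
assert (- (L - 1) * (w i - u i) / L <= (((d * (k * w (i + 1)%Z - (k + 1) * w i + w (i - 1)%Z) + g (w i) a) -
   (d * (k * u (i + 1)%Z - (k + 1) * u i + u (i - 1)%Z) + g (u i) a))) / L).
{ unfold Rdiv. apply Rmult_le_compat_r; [apply Rlt_le, Rinv_0_lt_compat; lra | lra]. }
assert (- (L - 1) * (w i - u i) / L = - (w i - u i) + (w i - u i) / L) by (field; lra).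
assert (0 <= (w i - u i) / L) by (apply Rdiv_le_0_compat; lra).
lra.
Qed.

Lemma lattice_exists k a d (s : Z -> bool) : 0 < k -> 0 < a < 1 -> 0 < d ->
  d * (k + 1) * 4 < a ^ 2 -> d * (k + 1) * 4 < (1 - a) ^ 2 ->
  exists u : Z -> R, (forall i, Fl a d k u i = 0) /\
    (forall i, (s i = false -> 0 <= u i <= a / 2) /\ (s i = true -> (1 + a) / 2 <= u i <= 1)).
Proof.
intros hk ha hd h1 h2.
set (lo := fun i => if s i then (1 + a) / 2 else 0).
set (hi := fun i => if s i then 1 else a / 2).
assert (lohi : forall i, 0 <= lo i /\ lo i <= hi i /\ hi i <= 1).
{ intro i; unfold lo, hi; destruct (s i); lra. }
assert (hL : 0 < 5 + (k + 1) * d) by nra.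
assert (sub : forall i, lo i <= Tl a d k lo i).
{ intro i. unfold Tl. cut (0 <= Fl a d k lo i). 
  { intro. assert (0 <= Fl a d k lo i / (5 + (k + 1) * d)) by (apply Rdiv_le_0_compat; lra). lra. }
  unfold Fl. destruct (lohi (i+1)%Z) as [x1 _]. destruct (lohi (i-1)%Z) as [x2 _].
  destruct (s i) eqn:E.
  - replace (lo i) with ((1+a)/2) by (unfold lo; rewrite E; reflexivity). unfold g.
    assert (d * (k * lo (i + 1)%Z - (k + 1) * ((1 + a) / 2) + lo (i - 1)%Z) >= - d * (k+1) * ((1+a)/2)).
    { assert (0 <= d * (k * lo (i + 1)%Z)) by (apply Rmult_le_pos; nra).
      assert (0 <= d * lo (i - 1)%Z) by (apply Rmult_le_pos; lra). nra. }
    nra.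
  - replace (lo i) with 0 by (unfold lo; rewrite E; reflexivity). unfold g. assert (0 <= d * (k * lo (i + 1)%Z)) by (apply Rmult_le_pos; nra).
      assert (0 <= d * lo (i - 1)%Z) by (apply Rmult_le_pos; lra). nra. }
assert (sup : forall i, Tl a d k hi i <= hi i).
{ intro i. unfold Tl. cut (Fl a d k hi i <= 0).
  { intro. assert (Fl a d k hi i / (5 + (k + 1) * d) <= 0).
    { unfold Rdiv. apply Rmult_le_0_r; [lra|apply Rlt_le, Rinv_0_lt_compat; lra]. } lra. }
  unfold Fl. destruct (lohi (i+1)%Z) as [_ [_ x1]]. destruct (lohi (i-1)%Z) as [_ [_ x2]].
  destruct (s i) eqn:E.
  - replace (hi i) with 1 by (unfold hi; rewrite E; reflexivity). unfold g.
    assert (d * (k * hi (i + 1)%Z - (k + 1) * 1 + hi (i - 1)%Z) <= 0).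
    { assert (d * (k * hi (i + 1)%Z) <= d * k) by (apply Rmult_le_compat_l; nra).
      assert (d * hi (i - 1)%Z <= d * 1) by (apply Rmult_le_compat_l; lra). nra. }
    nra.
  - replace (hi i) with (a/2) by (unfold hi; rewrite E; reflexivity). unfold g.
    assert (d * (k * hi (i + 1)%Z) <= d * k) by (apply Rmult_le_compat_l; nra).
    assert (d * hi (i - 1)%Z <= d * 1) by (apply Rmult_le_compat_l; lra).
    assert (a / 2 * (1 - a / 2) * (a / 2 - a) = - (1 - a/2) * (a^2/4)) by field.
    assert (d * (k * hi (i + 1)%Z - (k + 1) * (a/2) + hi (i - 1)%Z) <= d * (k+1) * (1 - a/2)) by nra.
    nra. }
assert (Inv : forall n, forall i, lo i <= itl a d k lo n i /\ itl a d k lo n i <= itl a d k lo (S n) i /\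
                                  itl a d k lo (S n) i <= hi i).
{ induction n; intro i.
  - simpl. split; [lra|]. split; [apply sub|].
    apply Rle_trans with (Tl a d k hi i); [|apply sup].
    apply Tl_mono; auto.
  - destruct (IHn i) as [A1 [A2 A3]]. split; [lra|]. split.
    + change (itl a d k lo (S (S n)) i) with (Tl a d k (itl a d k lo (S n)) i).
      change (itl a d k lo (S n) i) with (Tl a d k (itl a d k lo n) i) at 1.
      apply Tl_mono; auto. intro j. destruct (IHn j) as [B1 [B2 B3]]. destruct (lohi j). lra.
    + change (itl a d k lo (S (S n)) i) with (Tl a d k (itl a d k lo (S n)) i).
      apply Rle_trans with (Tl a d k hi i); [|apply sup].
      apply Tl_mono; auto. intro j. destruct (IHn j) as [B1 [B2 B3]]. destruct (lohi j). lra. }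
assert (Ex : forall i, ex_finite_lim_seq (fun n => itl a d k lo n i)).
{ intro i. apply ex_finite_lim_seq_incr with (hi i).
  - intro n. apply (Inv n i).
  - intro n. destruct (Inv n i) as [_ [A2 A3]]. lra. }
set (u := fun i => real (Lim_seq (fun n => itl a d k lo n i))).
assert (Cv : forall i, is_lim_seq (fun n => itl a d k lo n i) (u i)).
{ intro i. unfold u. destruct (Ex i) as [l Hl].
  rewrite (is_lim_seq_unique _ _ Hl). exact Hl. }
assert (Bd : forall i, lo i <= u i <= hi i).
{ intro i. split.
  - apply (is_lim_seq_le (fun _ => lo i) (fun n => itl a d k lo n i) (lo i) (u i)); [intro n; apply (Inv n i)| apply is_lim_seq_const | apply Cv].
  - apply (is_lim_seq_le (fun n => itl a d k lo n i) (fun _ => hi i) (u i) (hi i)); [|apply Cv| apply is_lim_seq_const].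
    intro n. destruct (Inv n i) as [_ [A2 A3]]. lra. }
exists u. split.
- intro i.
  assert (C1 : is_lim_seq (fun n => itl a d k lo (S n) i) (u i)).
  { apply (is_lim_seq_incr_1 (fun n => itl a d k lo n i)). apply Cv. }
  assert (C2 : is_lim_seq (fun n => itl a d k lo (S n) i) (Tl a d k u i)).
  { simpl. unfold Tl, Fl, g.
    pose proof (Cv i) as Ci. pose proof (Cv (i+1)%Z) as Cp. pose proof (Cv (i-1)%Z) as Cm.
    apply is_lim_seq_plus'; [exact Ci|].
    unfold Rdiv. apply is_lim_seq_mult'; [|apply is_lim_seq_const].
    apply is_lim_seq_plus'.
    - apply is_lim_seq_mult'; [apply is_lim_seq_const|].
      apply is_lim_seq_plus'; [|exact Cm].
      apply is_lim_seq_minus'; [apply is_lim_seq_mult'; [apply is_lim_seq_const|exact Cp]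
        | apply is_lim_seq_mult'; [apply is_lim_seq_const| exact Ci]].
    - apply is_lim_seq_mult'; [apply is_lim_seq_mult'|].
      + exact Ci.
      + apply is_lim_seq_minus'; [apply is_lim_seq_const | exact Ci].
      + apply is_lim_seq_minus'; [exact Ci| apply is_lim_seq_const]. }
  pose proof (is_lim_seq_unique _ _ C1) as U1. rewrite (is_lim_seq_unique _ _ C2) in U1.
  injection U1 as U1. unfold Tl in U1.
  assert (Fl a d k u i / (5 + (k + 1) * d) = 0) by lra.
  unfold Rdiv in H. apply Rmult_integral in H. destruct H as [H|H]; auto.
  exfalso. apply Rinv_neq_0_compat in H; auto. lra.
- intro i. destruct (Bd i) as [B1 B2]. unfold lo, hi in B1, B2.
  split; intro E; rewrite E in B1, B2; lra.
Qed.

Lemma lub_le (E : R -> Prop) B : (forall x, E x -> x <= B) -> 0 <= B -> real (Lub_Rbar E) <= B.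
Proof.
intros H hB. destruct (Lub_Rbar_correct E) as [_ L].
specialize (L (Finite B) (fun x Ex => H x Ex)).
destruct (Lub_Rbar E); simpl in *; auto; contradiction.
Qed.

Lemma dplus_le k a : 0 < k -> 0 < a < 1 -> k * d_plus a k <= a ^ 2 / 4.
Proof.
intros hk ha. unfold d_plus.
assert (real (Lub_Rbar (fun z => exists y, 1 - a < y < 1 /\ z = - g (1 - y) a / (k * y))) <= a^2/(4*k)).
{ apply lub_le.
  - intros z [y [hy ->]]. unfold g.
    replace (- ((1 - y) * (1 - (1 - y)) * (1 - y - a)) / (k * y)) with ((1-y)*(a - (1-y)) / k) by (field; lra).
    replace (a^2/(4*k)) with ((a^2/4)/k) by (field; lra).
    unfold Rdiv. apply Rmult_le_compat_r; [apply Rlt_le, Rinv_0_lt_compat; lra|].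
    pose proof (pow2_ge_0 (1 - y - a/2)). nra.
  - apply Rdiv_le_0_compat; nra. }
apply (Rmult_le_compat_l k) in H; [|lra].
replace (k * (a^2/(4*k))) with (a^2/4) in H by (field; lra). exact H.
Qed.

Lemma dminus_le a : 0 < a < 1 -> d_minus a <= (1 - a) ^ 2 / 4.
Proof.
intros ha. unfold d_minus. apply lub_le.
- intros z [y [hy ->]]. unfold g.
  replace (y * (1 - y) * (y - a) / y) with ((1-y)*(y-a)) by (field; lra).
  pose proof (pow2_ge_0 (y - (1+a)/2)). nra.
- nra.
Qed.

Lemma up_p1 x : up (x + 1) = (up x + 1)%Z.
Proof.
symmetry. apply tech_up; rewrite plus_IZR; destruct (archimed x); lra.
Qed.

Lemma up_m1 x : up (x - 1) = (up x - 1)%Z.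
Proof.
symmetry. apply tech_up; rewrite minus_IZR; destruct (archimed x); lra.
Qed.

Lemma up_IZR i : up (IZR i) = (i + 1)%Z.
Proof.
symmetry. apply tech_up; rewrite plus_IZR; lra.
Qed.

Lemma phi_exists k a d (s : Z -> bool) : 0 < k -> 0 < a < 1 -> 0 < d ->
  d * (k + 1) * 4 < a ^ 2 -> d * (k + 1) * 4 < (1 - a) ^ 2 ->
  exists Phi : R -> R, stationary_solution a d k Phi /\
    (forall i : Z, (s i = false -> 0 <= Phi (IZR i) < a) /\ (s i = true -> a < Phi (IZR i) <= 1)) /\
    (forall x, Rabs (Phi x) <= 1).
Proof.
intros hk ha hd h1 h2.
destruct (lattice_exists k a d s hk ha hd h1 h2) as [u [Hu Hb]].
exists (fun x => u (up x - 1)%Z). split; [|split].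
- intro x. unfold lattice_rhs. rewrite up_p1, up_m1. rewrite <- (Hu (up x - 1)%Z). unfold Fl.
  replace (up x + 1 - 1)%Z with (up x - 1 + 1)%Z by ring.
  replace (up x - 1 - 1)%Z with (up x - 1 - 1)%Z by ring. reflexivity.
- intro i. rewrite up_IZR. replace (i + 1 - 1)%Z with i by ring.
  destruct (Hb i) as [B1 B2]. split; intro E; [specialize (B1 E)|specialize (B2 E)]; lra.
- intro x. destruct (Hb (up x - 1)%Z) as [B1 B2].
  destruct (s (up x - 1)%Z); [specialize (B2 eq_refl)|specialize (B1 eq_refl)];
  rewrite Rabs_pos_eq; lra.
Qed.

Theorem proposition2p8 (k a : R) (hk : 0 < k) (ha : 0 < a < 1) :
  (* (i) *)
  ((a <= 1 / (1 / sqrt k + 1) ->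
      Rmin (a ^ 2 / (4 * k)) ((1 - a) ^ 2 / 4) = a ^ 2 / (4 * k)) /\
   (a >= 1 / (1 / sqrt k + 1) ->
      Rmin (a ^ 2 / (4 * k)) ((1 - a) ^ 2 / 4) = (1 - a) ^ 2 / 4) /\
   (forall d : R, 0 < d -> d < Rmin (a ^ 2 / (4 * k)) ((1 - a) ^ 2 / 4) ->
      forall (c : R) (Phi : R -> R), monotone_tw_solution a d k c Phi -> c = 0)) /\
  (* (ii) *)
  ((forall d : R, 0 < d -> d < d_zero a k ->
      forall s : Z -> bool,
        exists Phi : R -> R, stationary_solution a d k Phi /\
          forall i : Z,
            (s i = false -> 0 <= Phi (IZR i) < a) /\
            (s i = true -> a < Phi (IZR i) <= 1)) /\
   (forall d : R, 0 < d -> d < d_zero a k ->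
      exists F : nat -> R -> R,
        (forall n m, F n = F m -> n = m) /\
        forall n, stationary_solution a d k (F n) /\
                  exists M, forall xi, Rabs (F n xi) <= M)) /\
  (* (iii) *)
  (1 < k -> forall d : R, a ^ 2 / (4 * (sqrt k - 1) ^ 2) < d ->
      forall (c : R) (Phi : R -> R), monotone_tw_solution a d k c Phi -> c < 0).
Proof.
set (s := sqrt k).
assert (ss : s * s = k) by (apply sqrt_sqrt; lra).
assert (s0 : 0 < s) by (apply sqrt_lt_R0; lra).
assert (Es : 1 / (1 / s + 1) = s / (1 + s)) by (field; lra).
assert (Hd0 : forall d, 0 < d -> d < d_zero a k -> d * (k + 1) * 4 < a ^ 2 /\ d * (k + 1) * 4 < (1 - a) ^ 2).
{ intros d hd hdz. unfold d_zero in hdz.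
  pose proof (dplus_le k a hk ha). pose proof (dminus_le a ha).
  assert (d * (k + 1) < Rmin (k * d_plus a k) (d_minus a)).
  { apply (Rmult_lt_compat_r (k+1)) in hdz; [|lra].
    replace (Rmin (k * d_plus a k) (d_minus a) / (k + 1) * (k + 1)) with (Rmin (k * d_plus a k) (d_minus a)) in hdz by (field; lra).
    lra. }
  generalize (Rmin_l (k * d_plus a k) (d_minus a)) (Rmin_r (k * d_plus a k) (d_minus a)). lra. }
split; [split; [|split]|split; [split|]].
- rewrite Es. intro h. apply Rmin_left.
  assert (a * (1 + s) <= s).
  { apply (Rmult_le_compat_r (1+s)) in h; [|lra].
    replace (s / (1 + s) * (1 + s)) with s in h by (field; lra). lra. }
  assert (a <= s * (1 - a)) by lra.
  assert (a^2 <= k * (1-a)^2) by (rewrite <- ss; nra).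
  replace (a^2/(4*k)) with ((a^2/k)/4) by (field; lra).
  apply Rmult_le_compat_r; [lra|].
  apply (Rmult_le_reg_l k); [lra|]. replace (k * (a^2/k)) with (a^2) by (field; lra). nra.
- rewrite Es. intro h. apply Rmin_right.
  assert (s <= a * (1 + s)).
  { apply Rge_le in h. apply (Rmult_le_compat_r (1+s)) in h; [|lra].
    replace (s / (1 + s) * (1 + s)) with s in h by (field; lra). lra. }
  assert (s * (1 - a) <= a) by lra.
  assert (0 <= s * (1-a)) by (apply Rmult_le_pos; lra).
  assert (k * (1-a)^2 <= a^2) by (rewrite <- ss; nra).
  replace (a^2/(4*k)) with ((a^2/k)/4) by (field; lra).
  apply Rmult_le_compat_r; [lra|].
  apply (Rmult_le_reg_l k); [lra|]. replace (k * (a^2/k)) with (a^2) by (field; lra). nra.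
- intros d hd hm c Phi H. apply (part1 k a d c Phi hk ha hd); auto.
  + generalize (Rmin_l (a ^ 2 / (4 * k)) ((1 - a) ^ 2 / 4)); intro.
    assert (d < a^2/(4*k)) by lra.
    apply (Rmult_lt_compat_r (4*k)) in H1; [|lra].
    replace (a ^ 2 / (4 * k) * (4 * k)) with (a^2) in H1 by (field; lra). lra.
  + generalize (Rmin_r (a ^ 2 / (4 * k)) ((1 - a) ^ 2 / 4)); intro. lra.
- intros d hd hdz sq. destruct (Hd0 d hd hdz) as [h1 h2].
  destruct (phi_exists k a d sq hk ha hd h1 h2) as [Phi [H1 [H2 _]]]. eauto.
- intros d hd hdz. destruct (Hd0 d hd hdz) as [h1 h2].
  set (sq := fun n (i : Z) => Z.eqb i (Z.of_nat n)).
  assert (HF : forall n, exists Phi : R -> R, stationary_solution a d k Phi /\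
    (forall i : Z, (sq n i = false -> 0 <= Phi (IZR i) < a) /\ (sq n i = true -> a < Phi (IZR i) <= 1)) /\
    (forall x, Rabs (Phi x) <= 1)).
  { intro n. apply phi_exists; auto. }
  destruct (choice _ HF) as [F HFs].
  exists F. split.
  + intros n m E. destruct (Nat.eq_dec n m) as [|ne]; auto. exfalso.
    destruct (HFs n) as [_ [Pn _]]. destruct (HFs m) as [_ [Pm _]].
    destruct (Pn (Z.of_nat n)) as [_ A]. destruct (Pm (Z.of_nat n)) as [B _].
    assert (sq n (Z.of_nat n) = true) by (unfold sq; apply Z.eqb_refl).
    assert (sq m (Z.of_nat n) = false) by (unfold sq; apply Z.eqb_neq; lia).
    specialize (A H). specialize (B H0). rewrite E in A. lra.
  + intro n. destruct (HFs n) as [A [_ C]]. split; auto. exists 1; auto.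
- intros hk1 d hd c Phi H.
  assert (s1 : 1 < s).
  { destruct (Rle_or_lt s 1); auto. nra. }
  assert (0 < (s - 1)^2) by nra.
  assert (0 < a^2 / (4 * (s - 1)^2)) by (apply Rdiv_lt_0_compat; nra).
  apply (part3 k a d c Phi hk1 ha); [lra| |exact H].
  fold s in hd |- *.
  apply (Rmult_lt_compat_r (4 * (s-1)^2)) in hd; [|lra].
  replace (a ^ 2 / (4 * (s - 1) ^ 2) * (4 * (s - 1) ^ 2)) with (a^2) in hd by (field; lra).
  lra.
Qed.
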